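(* Let $\theta:\mathbb{A}\to\mathbb{A}^\lambda$ be a primitive substitution satisfying the standing assumptions, and let $\widetilde\theta:\mathcal{X}\to\mathcal{X}^\lambda$ be its synchronizing part. Then (i) $c(\widetilde\theta)=1$; (ii) $\widetilde\theta$ is primitive; (iii) $h(\widetilde\theta)=1$.
   Context: Substitution $\theta:\mathbb{A}\to\mathbb{A}^\lambda$, $\lambda\ge2$, $\theta(a)=\theta(a)_0\cdots\theta(a)_{\lambda-1}$, iterates $\theta^k$; primitive: some $\theta^k(a)$ contains all letters for every $a$. Standing assumptions: $\theta(a_0)_0=a_0$, $\theta$ injective on letters, subshift infinite. For any primitive substitution $\zeta$ over $\mathbb{B}$: column number $c(\zeta)=\min_{k\ge1,0\le j<\lambda^k}|\{\zeta^k(b)_j:b\in\mathbb{B}\}|$; height $h(\zeta)=\max\{m\ge1:\gcd(m,\lambda)=1,\ m\mid\gcd\{r\ge1:v[r]=v[0]\}\}$ for a fixed point $v$ of a suitable power of $\zeta$. Synchronizing part: $\mathcal{X}$ is the set of $M\subset\mathbb{A}$ with $|M|=c(\theta)$ and $M=\{\theta^k(a)_j:a\in\mathbb{A}\}$ for some $k\ge1$, $0\le j<\lambda^k$. For $M\in\mathcal{X}$ and $0\le j<\lambda$, $\theta(M)_j:=\{\theta(a)_j:a\in M\}$ belongs to $\mathcal{X}$, and $\widetilde\theta(M):=\theta(M)_0\theta(M)_1\cdots\theta(M)_{\lambda-1}$ defines $\widetilde\theta:\mathcal{X}\to\mathcal{X}^\lambda$. *)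

(* Defs.v *)
From mathcomp Require Import all_boot all_order all_algebra.
From Stdlib Require Import ClassicalEpsilon.
Set Implicit Arguments. Unset Strict Implicit. Unset Printing Implicit Defensive.

Section Subst.
Variables (B : finType) (n : nat) (zeta : B -> n.-tuple B).

Definition subst_word (w : seq B) : seq B := flatten [seq val (zeta b) | b <- w].

Definition subst_iter (k : nat) (b : B) : seq B := iter k subst_word [:: b].

Definition column (k j : nat) : {set B} :=
  [set nth b (subst_iter k b) j | b : B].

Definition is_column_number (c : nat) : Prop :=
  (exists k j, 0 < k /\ j < n ^ k /\ #|column k j| = c) /\
  (forall k j, 0 < k -> j < n ^ k -> c <= #|column k j|).

Definition primitive : Prop :=
  exists k, 0 < k /\ forall a b : B, b \in subst_iter k a.

Definition is_fixed_point (p : nat) (v : nat -> B) : Prop :=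
  forall i j, j < n ^ p -> v (i * n ^ p + j) = nth (v i) (subst_iter p (v i)) j.

Definition height_ok (v : nat -> B) (m : nat) : Prop :=
  0 < m /\ coprime m n /\ (forall r, 0 < r -> v r = v 0 -> m %| r).
Definition is_height_of (v : nat -> B) (h : nat) : Prop :=
  height_ok v h /\ (forall m, height_ok v m -> m <= h).

(* h(zeta) = h : fixed points of powers exist, and every such fixed point
   has height h (the height does not depend on the chosen fixed point) *)
Definition is_height (h : nat) : Prop :=
  (exists p v, 0 < p /\ is_fixed_point p v) /\
  (forall p v, 0 < p -> is_fixed_point p v -> is_height_of v h).
End Subst.

Definition in_language (A : finType) (n : nat) (theta : A -> n.-tuple A)
  (w : seq A) : Prop := exists k a, infix w (subst_iter theta k a).

Definition in_subshift (A : finType) (n : nat) (theta : A -> n.-tuple A)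
  (x : int -> A) : Prop :=
  forall (i : int) (m : nat), in_language theta (mkseq (fun l => x (i + l%:Z)%R) m).

Definition subshift_infinite (A : finType) (n : nat) (theta : A -> n.-tuple A) : Prop :=
  ~ exists (N : nat) (f : 'I_N -> (int -> A)),
      forall x, in_subshift theta x -> exists i, x = f i.

Definition pbool (P : Prop) : bool :=
  if excluded_middle_informative P then true else false.

Definition in_sync (A : finType) (n : nat) (theta : A -> n.-tuple A) (M : {set A}) : bool :=
  pbool (exists c, is_column_number theta c /\ #|M| = c /\
           exists k j, 0 < k /\ j < n ^ k /\ M = column theta k j).

Definition sync_alph (A : finType) (n : nat) (theta : A -> n.-tuple A) :=
  {M : {set A} | in_sync theta M}.

Definition set_col (A : finType) (n : nat) (theta : A -> n.-tuple A)
  (M : {set A}) (j : nat) : {set A} := [set nth a (val (theta a)) j | a in M].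

(* synchronizing part theta~ : calX -> calX^n.  Since theta(M)_j lies in calX
   (fact recorded in the paper), insubd never uses its default M. *)
Definition sync_part (A : finType) (n : nat) (theta : A -> n.-tuple A)
  (M : sync_alph theta) : n.-tuple (sync_alph theta) :=
  [tuple insubd M (set_col theta (val M) j) | j < n].
Arguments sync_part {A n} theta M.

(* Main.v *)
Require Import Defs.
From mathcomp Require Import all_boot all_order all_algebra.
From mathcomp Require Import zify.
From Stdlib Require Import ClassicalEpsilon.
Set Implicit Arguments. Unset Strict Implicit. Unset Printing Implicit Defensive.
Lemma idx_lt i j a b : i < a -> j < b -> i * b + j < a * b.
Proof. move=> Hi Hj. have: i.+1 * b <= a * b by rewrite leq_mul2r Hi orbT.
rewrite mulSn. lia. Qed.

Section Gen.
Variables (B : finType) (n : nat) (zeta : B -> n.-tuple B).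
Local Notation sw := (subst_word zeta).

Lemma sw_cons x s : sw (x :: s) = val (zeta x) ++ sw s.
Proof. by []. Qed.
Lemma sw_cat s1 s2 : sw (s1 ++ s2) = sw s1 ++ sw s2.
Proof. by rewrite /subst_word map_cat flatten_cat. Qed.
Lemma iter_sw_cat k s1 s2 : iter k sw (s1 ++ s2) = iter k sw s1 ++ iter k sw s2.
Proof. by elim: k => //= k IH; rewrite IH sw_cat. Qed.
Lemma size_sw s : size (sw s) = n * size s.
Proof. elim: s => [|x s IH]; first by rewrite muln0.
by rewrite sw_cons size_cat size_tuple IH /= mulnS. Qed.
Lemma size_iter_sw k s : size (iter k sw s) = n ^ k * size s.
Proof. elim: k => [|k IH] /=; first by rewrite mul1n.
by rewrite size_sw IH expnS mulnA. Qed.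
Lemma size_subst_iter k b : size (subst_iter zeta k b) = n ^ k.
Proof. by rewrite /subst_iter size_iter_sw muln1. Qed.
Lemma subst_iter1 b : subst_iter zeta 1 b = val (zeta b).
Proof. by rewrite /subst_iter /= /subst_word /= cats0. Qed.
Lemma subst_iter0 b : subst_iter zeta 0 b = [:: b].
Proof. by []. Qed.

Lemma nth_iter_sw k s x0 i j : i < size s -> j < n ^ k ->
  nth x0 (iter k sw s) (i * n ^ k + j) = nth x0 (iter k sw [:: nth x0 s i]) j.
Proof.
elim: s i => [|x s IH] [|i] //= Hi Hj.
- by rewrite -cat1s iter_sw_cat nth_cat size_iter_sw muln1 mul0n add0n Hj.
- rewrite -cat1s iter_sw_cat nth_cat size_iter_sw muln1 mulSn -addnA ltnNge leq_addr /= addKn.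
  exact: IH.
Qed.

Lemma nth_subst_iterD t k b x0 i j : i < n ^ t -> j < n ^ k ->
  nth x0 (subst_iter zeta (t + k) b) (i * n ^ k + j) =
  nth x0 (subst_iter zeta k (nth b (subst_iter zeta t b) i)) j.
Proof.
move=> Hi Hj. rewrite /subst_iter addnC iterD nth_iter_sw ?size_iter_sw ?muln1 //.
by rewrite [nth x0 (iter t _ _) i](set_nth_default b) ?size_iter_sw ?muln1.
Qed.

Lemma nth_subst_iterD0 t k b x0 j : 0 < n -> j < n ^ k ->
  nth x0 (subst_iter zeta (t + k) b) j =
  nth x0 (subst_iter zeta k (nth b (subst_iter zeta t b) 0)) j.
Proof. move=> Hn Hj. have := @nth_subst_iterD t k b x0 0 j. rewrite mul0n add0n; apply => //. by rewrite expn_gt0 Hn. Qed.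

Definition synch k0 j0 (m0 : B) :=
  0 < k0 /\ j0 < n ^ k0 /\ forall M, nth M (subst_iter zeta k0 M) j0 = m0.

Lemma colnum1 k0 j0 m0 : synch k0 j0 m0 -> is_column_number zeta 1.
Proof.
move=> [Hk [Hj HS]]; split.
  exists k0, j0; split => //; split => //.
  rewrite (_ : column _ _ _ = [set m0]) ?cards1 //.
  apply/setP => x; rewrite inE; apply/imsetP/eqP => [[b _ ->]|->] //.
  by exists m0.
move=> k j _ _; rewrite card_gt0; apply/set0Pn.
by exists (nth m0 (subst_iter zeta k m0) j); apply/imsetP; exists m0.
Qed.

Lemma fp_iter p v : 0 < n -> is_fixed_point zeta p v -> forall s i j, j < n ^ (p * s) ->
  v (i * n ^ (p * s) + j) = nth (v i) (subst_iter zeta (p * s) (v i)) j.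
Proof.
move=> Hn Hfp; elim=> [|s IH] i j.
  by rewrite muln0 expn0 ltnS leqn0 => /eqP ->; rewrite muln1 addn0.
rewrite mulnS addnC => Hj.
have Hp : 0 < n ^ p by rewrite expn_gt0 Hn.
have Hj1 : j %/ n ^ p < n ^ (p * s) by rewrite ltn_divLR // -expnD.
have Hj2 : j %% n ^ p < n ^ p by rewrite ltn_mod.
rewrite {1}(divn_eq j (n ^ p)) expnD mulnA addnA -mulnDl Hfp // IH //.
rewrite [in RHS](divn_eq j (n ^ p)) nth_subst_iterD //.
by rewrite (set_nth_default (v i)) // size_subst_iter.
Qed.

Lemma height1 k0 j0 m0 : 1 < n -> synch k0 j0 m0 -> primitive zeta ->
  forall p v, 0 < p -> is_fixed_point zeta p v -> is_height_of n v 1.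
Proof.
move=> Hn [Hk [Hj HS]] [K1 [HK1 Hprim]] p v Hp Hfp.
have Hn0 : 0 < n by lia.
split; first by split => //; split => //; rewrite /coprime gcd1n.
move=> m [Hm [Hcop Hdiv]].
set u := v 0.
have Hu := Hprim m0 u.
set q := index u (subst_iter zeta K1 m0).
have Hq : q < n ^ K1 by rewrite -(size_subst_iter K1 m0) index_mem.
set L := p * (k0 + K1).
have HL : k0 + K1 <= L by rewrite /L leq_pmull.
set t := L - (k0 + K1).
have HLt : L = (t + k0) + K1 by rewrite -addnA subnK.
have Hj0 : j0 < n ^ (t + k0).
  apply: (leq_trans Hj); apply: leq_pexp2l => //; exact: leq_addl.
have HJ : j0 * n ^ K1 + q < n ^ L by rewrite HLt expnD idx_lt.
have key : forall i, v (i * n ^ L + (j0 * n ^ K1 + q)) = u.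
  move=> i; rewrite /L fp_iter // -/L HLt nth_subst_iterD //.
  rewrite nth_subst_iterD0 //.
  rewrite [nth (v i) (subst_iter zeta k0 _) j0](set_nth_default (nth (v i) (subst_iter zeta t (v i)) 0)) ?size_subst_iter // HS.
  by rewrite (set_nth_default m0) ?size_subst_iter // nth_index.
have d1 := Hdiv _ _ (key 1).
have d2 := Hdiv _ _ (key 2).
have hX : 0 < n ^ L by rewrite expn_gt0 Hn0.
set X := n ^ L in d1 d2 hX; set J := j0 * n ^ K1 + q in d1 d2.
have e1 := d1 ltac:(lia).
have e2 := d2 ltac:(lia).
have e3 : m %| X.
  have E : 2 * X + J = (1 * X + J) + X by lia.
  by rewrite E dvdn_addr in e2.
have := coprimeXr L Hcop; rewrite /coprime (gcdn_idPl e3) => /eqP ->. done.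
Qed.

Definition fl (b : B) := nth b (subst_iter zeta 1 b) 0.

Lemma first_iter k b : 0 < n -> nth b (subst_iter zeta k b) 0 = iter k fl b.
Proof.
move=> Hn; elim: k => [|k IH] //.
have := @nth_subst_iterD k 1 b b 0 0.
rewrite mul0n add0n addn1 expn1 => ->; rewrite ?expn_gt0 ?Hn //.
rewrite IH iterS /fl (set_nth_default (iter k fl b)) // size_subst_iter expn1 //.
Qed.

Lemma exists_fp (b0 : B) : 1 < n -> exists p v, 0 < p /\ is_fixed_point zeta p v.
Proof.
move=> Hn; have Hn0 : 0 < n by lia.
pose g (i : 'I_#|B|.+1) := iter i fl b0.
have : ~~ injectiveb g.
  apply/negP => /injectiveP /leq_card; rewrite card_ord; lia.
case/injectivePn => i [j Hij Hg].
wlog lt_ij : i j Hij Hg / i < j.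
  move=> W; case: (ltngtP i j) => [h|h|h]; first exact: (W i j).
  - by apply: (W j i) => //; rewrite eq_sym.
  - by move: Hij; rewrite (val_inj h) eqxx.
set y := iter i fl b0.
set p := j - i.
have Hp : 0 < p by rewrite subn_gt0.
have Hy : iter p fl y = y.
  by rewrite /y -iterD subnK 1?ltnW //; move: Hg; rewrite /g => <-.
have Hyc : forall c, iter (p * c) fl y = y.
  elim=> [|c IH]; first by rewrite muln0.
  by rewrite mulnS iterD IH Hy.
have pref : forall a b i0, a <= b -> i0 < n ^ (p * a) ->
    nth y (subst_iter zeta (p * a) y) i0 = nth y (subst_iter zeta (p * b) y) i0.
  move=> a b i0 hab hi.
  have -> : p * b = p * (b - a) + p * a by rewrite -mulnDr subnK.
  by rewrite nth_subst_iterD0 // first_iter // Hyc.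
have lev : forall a b i0, i0 < n ^ (p * a) -> i0 < n ^ (p * b) ->
    nth y (subst_iter zeta (p * a) y) i0 = nth y (subst_iter zeta (p * b) y) i0.
  move=> a b i0 ha hb; case: (leqP a b) => h; first exact: pref.
  by rewrite (pref b a) // ltnW.
have big : forall i0, i0 < n ^ (p * i0.+1).
  move=> i0; apply: (leq_trans (ltn_expl i0 Hn)); apply: leq_pexp2l => //.
  by rewrite (leq_trans (leqnSn i0)) // leq_pmull.
pose v i0 := nth y (subst_iter zeta (p * i0.+1) y) i0.
exists p, v; split => // i0 j0 Hj0.
have hpi : 0 < n ^ p by rewrite expn_gt0 Hn0.
have HI : i0 * n ^ p + j0 < n ^ (p * i0.+2).
  rewrite (_ : p * i0.+2 = p * i0.+1 + p) ?expnD; last by rewrite mulnS addnC.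
  apply: idx_lt => //; exact: big.
rewrite /v (lev _ i0.+2) ?big //.
rewrite (_ : p * i0.+2 = p * i0.+1 + p); last by rewrite mulnS addnC.
rewrite nth_subst_iterD ?big //.
by rewrite (set_nth_default (v i0)) // size_subst_iter.
Qed.
End Gen.
Lemma pboolP (P : Prop) : pbool P <-> P.
Proof. by rewrite /pbool; case: excluded_middle_informative. Qed.

Section Th.
Variables (A : finType) (lam : nat) (theta : A -> lam.-tuple A).
Hypothesis Hlam : 1 < lam.

Definition phi k j (M : {set A}) := [set nth a (subst_iter theta k a) j | a in M].

Lemma colnum_ex : exists c, is_column_number theta c.
Proof.
have ex : exists c, pbool (exists k j, 0 < k /\ j < lam ^ k /\ #|column theta k j| = c).
  exists #|column theta 1 0|; apply/pboolP; exists 1, 0; split => //; split => //.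
  by rewrite expn1; lia.
case: (ex_minnP ex) => c /pboolP Hc Hmin; exists c; split => // k j Hk Hj.
by apply: Hmin; apply/pboolP; exists k, j.
Qed.

Lemma colnum_uniq c1 c2 : is_column_number theta c1 -> is_column_number theta c2 -> c1 = c2.
Proof.
move=> [[k1 [j1 [h1 [h1' e1]]]] m1] [[k2 [j2 [h2 [h2' e2]]]] m2].
apply/eqP; rewrite eqn_leq; apply/andP; split.
  by rewrite -e2; apply: m1.
by rewrite -e1; apply: m2.
Qed.

Variable c : nat.
Hypothesis Hc : is_column_number theta c.

Lemma in_syncP M : in_sync theta M <->
  (#|M| = c /\ exists k j, 0 < k /\ j < lam ^ k /\ M = column theta k j).
Proof.
rewrite /in_sync pboolP; split.
  move=> [c' [Hc' [e H]]]; split => //; by rewrite e (colnum_uniq Hc' Hc).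
move=> [e H]; by exists c.
Qed.

Lemma col_phi k j : column theta k j = phi k j setT.
Proof. apply/setP => x; apply/imsetP/imsetP => [[b _ ->]|[b _ ->]]; by exists b. Qed.

Lemma phi_comp k' j' k j M : j' < lam ^ k' -> j < lam ^ k ->
  phi k j (phi k' j' M) = phi (k' + k) (j' * lam ^ k + j) M.
Proof.
move=> H1 H2; rewrite /phi -imset_comp; apply: eq_imset => a /=.
rewrite nth_subst_iterD //.
by rewrite (set_nth_default a) // size_subst_iter.
Qed.

Lemma phi_sync k j M : in_sync theta M -> j < lam ^ k -> in_sync theta (phi k j M).
Proof.
move=> /in_syncP [eM [k0 [j0 [hk0 [hj0 EM]]]]] hj.
have Hl : 0 < lam by lia.
have E : phi k j M = column theta (k0 + k) (j0 * lam ^ k + j).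
  by rewrite EM col_phi phi_comp // -col_phi.
apply/in_syncP; split; last first.
  exists (k0 + k), (j0 * lam ^ k + j); split; first by rewrite addn_gt0 hk0.
  by split => //; rewrite expnD idx_lt.
apply/eqP; rewrite eqn_leq; apply/andP; split.
  by rewrite -eM; apply: leq_imset_card.
rewrite E; case: Hc => _; apply; first by rewrite addn_gt0 hk0.
by rewrite expnD idx_lt.
Qed.

Lemma phi_sync_eq k0 j0 M : in_sync theta M -> 0 < k0 -> j0 < lam ^ k0 ->
  #|column theta k0 j0| = c -> phi k0 j0 M = column theta k0 j0.
Proof.
move=> HM hk hj hc; apply/eqP; rewrite eqEcard; apply/andP; split.
  by apply/subsetP => x /imsetP [a _ ->]; apply/imsetP; exists a.
have /in_syncP [-> _] := phi_sync HM hj; by rewrite hc.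
Qed.


Lemma set_col_phi M j : set_col theta M j = phi 1 j M.
Proof. by apply: eq_imset => a; rewrite subst_iter1. Qed.

Lemma val_nth_sync k (M : sync_alph theta) j : j < lam ^ k ->
  val (nth M (subst_iter (sync_part theta) k M) j) = phi k j (val M).
Proof.
have Hl : 0 < lam by lia.
elim: k M j => [|k IH] M j.
  rewrite expn0 ltnS leqn0 => /eqP -> /=.
  by rewrite /phi /= imset_id.
move=> Hj.
have Hj1 : j %/ lam < lam ^ k by rewrite ltn_divLR // -expnSr.
have Hj2 : j %% lam < lam by rewrite ltn_mod.
have := @nth_subst_iterD _ _ (sync_part theta) k 1 M M (j %/ lam) (j %% lam).
rewrite expn1 addn1 -divn_eq => -> //.
set N := nth M (subst_iter _ k M) _.
rewrite subst_iter1 (set_nth_default N) ?size_tuple //.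
rewrite -(tnth_nth N (sync_part theta N) (Ordinal Hj2)) tnth_mktuple /=.
have EN : val N = phi k (j %/ lam) (val M) by rewrite /N IH.
rewrite insubdK; last first.
  rewrite set_col_phi; apply: phi_sync; first exact: valP. by rewrite expn1.
by rewrite set_col_phi EN phi_comp ?expn1 // addn1 -divn_eq.
Qed.

Lemma sync_synch : exists k0 j0 m0, synch (sync_part theta) k0 j0 m0.
Proof.
case: (Hc) => [[k0 [j0 [hk [hj hc]]]] _].
have Hin : in_sync theta (column theta k0 j0).
  by apply/in_syncP; split => //; exists k0, j0.
exists k0, j0, (exist (fun M => in_sync theta M) _ Hin); split => //; split => // M.
apply: val_inj => /=; rewrite val_nth_sync //.
exact (phi_sync_eq (valP M) hk hj hc).
Qed.

Lemma sync_prim : primitive (sync_part theta).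
Proof.
have Hl : 0 < lam by lia.
pose P (N : sync_alph theta) K := forall K', K <= K' -> forall M, N \in subst_iter (sync_part theta) K' M.
have HP : forall N, exists K, P N K.
  move=> N; have /in_syncP [hc [kN [jN [hk [hj EN]]]]] := valP N.
  exists kN => K' hK M.
  have Hj : jN < lam ^ K' by apply: (leq_trans hj); apply: leq_pexp2l.
  have -> : N = nth M (subst_iter (sync_part theta) K' M) jN.
    have E1 : phi K' jN (val M) = phi kN jN (phi (K' - kN) 0 (val M)).
      by rewrite phi_comp ?expn_gt0 ?Hl // mul0n add0n subnK.
    apply: val_inj; rewrite val_nth_sync // E1 EN phi_sync_eq //.
      by apply: phi_sync; [exact: valP | rewrite expn_gt0 Hl].
    by rewrite -EN.
  by apply: mem_nth; rewrite size_subst_iter.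
have : forall s : seq (sync_alph theta), exists K, forall N, N \in s -> P N K.
  elim=> [|N s [K IH]]; first by exists 0.
  case: (HP N) => K1 H1; exists (maxn K K1) => N'; rewrite inE => /orP [/eqP ->|hN] K' hK.
    by apply: H1; apply: leq_trans hK; apply: leq_maxr.
  by apply: IH => //; apply: leq_trans hK; apply: leq_maxl.
case/(_ (enum (@predT (sync_alph theta)))) => K HK.
exists K.+1; split => // M N; apply: (HK N); first by rewrite mem_enum.
exact: leqnSn.
Qed.

End Th.

Theorem mainTheorem11 (A : finType) (lam : nat) (theta : A -> lam.-tuple A) :
  2 <= lam ->
  primitive theta ->
  (exists a0 : A, nth a0 (val (theta a0)) 0 = a0) ->
  injective theta ->
  subshift_infinite theta ->
  [/\ is_column_number (sync_part theta) 1,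
      primitive (sync_part theta) &
      is_height (sync_part theta) 1].
Proof.
move=> Hl _ _ _ _.
have [c Hc] := colnum_ex theta Hl.
have [k0 [j0 [m0 HS]]] := sync_synch Hl Hc.
have Hp := sync_prim Hl Hc.
split; first exact: colnum1 HS.
  exact: Hp.
split; first exact: exists_fp m0 Hl.
move=> p v hp hv; exact (height1 Hl HS Hp hp hv).
Qed.
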